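(* Let $1\le N\le3$, $a,c>0$, $1\le q<2$, $2+\frac8N<p<2^*$, and let $h\in L^{\frac{p}{p-q}}(\mathbb{R}^N)\cap C^1(\mathbb{R}^N)$ with $h\ge0$ and $\langle\nabla h,x\rangle\in L^{\frac{2}{2-q}}(\mathbb{R}^N)$. Assume $$\|h\|_{\frac{p}{p-q}}<\frac{aq(p\gamma_p-2)}{2\mathcal{C}_{N,p}^{q}\gamma_p(p-q)}\left(\frac{ap(2-q\gamma_p)}{2\gamma_p(p-q)\mathcal{C}_{N,p}^{p}}\right)^{\frac{2-q\gamma_p}{p\gamma_p-2}}c^{-\frac{(1-\gamma_p)(p-q)}{p\gamma_p-2}}.$$ Define $\varphi:(0,\infty)\to\mathbb{R}$ by $$\varphi(t):=\frac a2t^2-\frac1p\mathcal{C}_{N,p}^pc^{\frac{p-p\gamma_p}{2}}t^{p\gamma_p}-\frac1q\mathcal{C}_{N,p}^qc^{\frac{q(1-\gamma_p)}{2}}\|h\|_{\frac{p}{p-q}}t^{q\gamma_p}.$$ Then $\varphi$ has a local strict minimum at a negative level and a global strict maximum at a positive level. Moreover, there exist $0<R_1<R_2$, depending on $c$, such that $\varphi(R_1)=0=\varphi(R_2)$ and $\varphi(t)>0$ if and only if $t\in(R_1,R_2)$.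
   Context: $2^*=6$ if $N=3$, $2^*=+\infty$ if $N=1,2$. $\gamma_p:=\frac{N(p-2)}{2p}$, and $\mathcal{C}_{N,p}$ is the constant in the Gagliardo–Nirenberg inequality $\|u\|_p\le\mathcal{C}_{N,p}\|\nabla u\|_2^{\gamma_p}\|u\|_2^{1-\gamma_p}$ on $H^1(\mathbb{R}^N)$. *)

(* Defs.v *)
(* concrete reals R, real powers via Rpower (all bases used are > 0). *)
From Stdlib Require Import Reals.
Open Scope R_scope.

Definition gammap (N : nat) (p : R) : R := INR N * (p - 2) / (2 * p).

(* p < 2^*  where 2^* = 2N/(N-2) if N >= 3 and 2^* = +infinity if N = 1, 2 *)
Definition below_two_star (N : nat) (p : R) : Prop :=
  (3 <= N)%nat -> p < 2 * INR N / (INR N - 2).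

(* The right-hand side of the smallness assumption on ||h||_{p/(p-q)};
   C stands for the Gagliardo--Nirenberg constant C_{N,p}. *)
Definition h_bound (N : nat) (a c p q C : R) : R :=
  let g := gammap N p in
  a * q * (p * g - 2) / (2 * Rpower C q * g * (p - q))
  * Rpower (a * p * (2 - q * g) / (2 * g * (p - q) * Rpower C p))
           ((2 - q * g) / (p * g - 2))
  * Rpower c (- ((1 - g) * (p - q) / (p * g - 2))).

(* phi(t) = a/2 t^2 - 1/p C^p c^{(p - p g)/2} t^{p g}
            - 1/q C^q c^{q(1-g)/2} ||h|| t^{q g},  with H = ||h||_{p/(p-q)} *)
Definition phi (N : nat) (a c p q C H : R) (t : R) : R :=
  let g := gammap N p in
  a / 2 * t ^ 2
  - / p * Rpower C p * Rpower c ((p - p * g) / 2) * Rpower t (p * g)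
  - / q * Rpower C q * Rpower c (q * (1 - g) / 2) * H * Rpower t (q * g).

(* Main.v *)
Require Import Defs.
From Stdlib Require Import Reals Lra Lia.
Open Scope R_scope.

Lemma Rpow_pos x y : 0 < Rpower x y.
Proof. unfold Rpower; apply exp_pos. Qed.

Lemma incr_of_deriv f f' x y : x < y ->
  (forall c, x <= c <= y -> derivable_pt_lim f c (f' c)) ->
  (forall c, x < c < y -> 0 < f' c) -> f x < f y.
Proof.
  intros Hxy Hd Hp. destruct (MVT_cor2 f f' x y Hxy Hd) as [c [E Hc]].
  specialize (Hp c Hc). nra.
Qed.

Lemma decr_of_deriv f f' x y : x < y ->
  (forall c, x <= c <= y -> derivable_pt_lim f c (f' c)) ->
  (forall c, x < c < y -> f' c < 0) -> f y < f x.
Proof.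
  intros Hxy Hd Hp. destruct (MVT_cor2 f f' x y Hxy Hd) as [c [E Hc]].
  specialize (Hp c Hc). nra.
Qed.

Definition gf K0 K1 K2 e1 e2 t := K1 * Rpower t e1 - K2 * Rpower t e2 - K0.
Definition gf' K1 K2 e1 e2 t := K1 * (e1 * Rpower t (e1 - 1)) - K2 * (e2 * Rpower t (e2 - 1)).

Lemma gf_deriv K0 K1 K2 e1 e2 t : 0 < t ->
  derivable_pt_lim (gf K0 K1 K2 e1 e2) t (gf' K1 K2 e1 e2 t).
Proof.
  intros Ht. unfold gf, gf'.
  replace (K1 * (e1 * Rpower t (e1 - 1)) - K2 * (e2 * Rpower t (e2 - 1)))
    with (K1 * (e1 * Rpower t (e1 - 1)) - K2 * (e2 * Rpower t (e2 - 1)) - 0) by ring.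
  apply (derivable_pt_lim_minus (fun t => K1 * Rpower t e1 - K2 * Rpower t e2) (fun _ => K0)).
  2: apply derivable_pt_lim_const.
  apply (derivable_pt_lim_minus (fun t => K1 * Rpower t e1) (fun t => K2 * Rpower t e2)).
  - apply (derivable_pt_lim_scal (fun t => Rpower t e1)). now apply derivable_pt_lim_power.
  - apply (derivable_pt_lim_scal (fun t => Rpower t e2)). now apply derivable_pt_lim_power.
Qed.

Lemma gf'_eq K1 K2 e1 e2 t : 0 < t ->
  gf' K1 K2 e1 e2 t = Rpower t (e1 - 1) * (K1 * e1 - K2 * e2 * Rpower t (e2 - e1)).
Proof.
  intros Ht. unfold gf'.
  replace (e2 - 1) with ((e1 - 1) + (e2 - e1)) by ring.
  rewrite Rpower_plus. ring.
Qed.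

Lemma gf_cont K0 K1 K2 e1 e2 t : 0 < t -> continuity_pt (gf K0 K1 K2 e1 e2) t.
Proof.
  intros Ht. apply derivable_continuous_pt. exists (gf' K1 K2 e1 e2 t).
  now apply gf_deriv.
Qed.

Lemma generic K0 K1 K2 e1 e2 : 0 < K0 -> 0 < K1 -> 0 < K2 -> 0 < e1 -> e1 < e2 ->
  (exists ts, 0 < ts /\ 0 < gf K0 K1 K2 e1 e2 ts) ->
  exists z1 z2 m, 0 < z1 < m /\ m < z2 /\ gf K0 K1 K2 e1 e2 z1 = 0 /\
    gf K0 K1 K2 e1 e2 z2 = 0 /\
    (forall t, 0 < t < m -> K2 * e2 * Rpower t (e2 - e1) < K1 * e1) /\
    (forall t, 0 < t -> (0 < gf K0 K1 K2 e1 e2 t <-> z1 < t < z2) /\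
                        (gf K0 K1 K2 e1 e2 t < 0 <-> t < z1 \/ z2 < t)).
Proof.
  intros H0 H1 H2 He1 He12 [ts [Hts Hfts]].
  set (f := gf K0 K1 K2 e1 e2) in *.
  set (base := K1 * e1 / (K2 * e2)).
  assert (Hb : 0 < base) by (unfold base; apply Rdiv_lt_0_compat; nra).
  set (m := Rpower base (/ (e2 - e1))).
  assert (Hm : 0 < m) by apply Rpow_pos.
  assert (Hmp : Rpower m (e2 - e1) = base).
  { unfold m. rewrite Rpower_mult, Rinv_l by lra. now apply Rpower_1. }
  assert (Hlt : forall t, 0 < t < m -> K2 * e2 * Rpower t (e2 - e1) < K1 * e1).
  { intros t Ht. assert (Rpower t (e2 - e1) < Rpower m (e2 - e1))
      by (apply Rlt_Rpower_l; lra).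
    rewrite Hmp in H. unfold base in H.
    apply (Rmult_lt_compat_l (K2 * e2)) in H; [|nra].
    field_simplify in H; lra. }
  assert (Hgt : forall t, m < t -> K1 * e1 < K2 * e2 * Rpower t (e2 - e1)).
  { intros t Ht. assert (Rpower m (e2 - e1) < Rpower t (e2 - e1))
      by (apply Rlt_Rpower_l; lra).
    rewrite Hmp in H. unfold base in H.
    apply (Rmult_lt_compat_l (K2 * e2)) in H; [|nra].
    field_simplify in H; lra. }
  assert (inc : forall x y, 0 < x -> x < y -> y <= m -> f x < f y).
  { intros x y Hx Hxy Hy. apply (incr_of_deriv f (gf' K1 K2 e1 e2)); auto.
    - intros c Hc. apply gf_deriv; lra.
    - intros c Hc. rewrite gf'_eq by lra.
      assert (0 < Rpower c (e1 - 1)) by apply Rpow_pos.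
      assert (K2 * e2 * Rpower c (e2 - e1) < K1 * e1) by (apply Hlt; lra).
      nra. }
  assert (dec : forall x y, m <= x -> x < y -> f y < f x).
  { intros x y Hx Hxy. apply (decr_of_deriv f (gf' K1 K2 e1 e2)); auto.
    - intros c Hc. apply gf_deriv; lra.
    - intros c Hc. rewrite gf'_eq by lra.
      assert (0 < Rpower c (e1 - 1)) by apply Rpow_pos.
      assert (K1 * e1 < K2 * e2 * Rpower c (e2 - e1)) by (apply Hgt; lra).
      nra. }
  assert (Hfm : 0 < f m).
  { destruct (Rtotal_order ts m) as [Hl|[He|Hg]].
    - specialize (inc ts m Hts Hl (Rle_refl _)). lra.
    - rewrite <- He; exact Hfts.
    - specialize (dec m ts (Rle_refl _) Hg). lra. }
  assert (Hup : forall t, 0 < t -> f t < K1 * Rpower t e1 - K0).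
  { intros t Ht. unfold f, gf. assert (0 < Rpower t e2) by apply Rpow_pos. nra. }
  set (e0 := Rpower (K0 / K1) (/ e1)).
  assert (He0 : 0 < e0) by apply Rpow_pos.
  assert (He0p : Rpower e0 e1 = K0 / K1).
  { unfold e0. rewrite Rpower_mult, Rinv_l by lra. apply Rpower_1.
    apply Rdiv_lt_0_compat; lra. }
  assert (Hfe0 : f e0 < 0).
  { specialize (Hup e0 He0). rewrite He0p in Hup.
    replace (K1 * (K0 / K1)) with K0 in Hup by (field; lra). lra. }
  assert (He0m : e0 < m).
  { destruct (Rlt_or_le e0 m) as [|Hle]; auto.
    assert (Rpower m e1 <= Rpower e0 e1) by (apply Rle_Rpower_l; lra).
    specialize (Hup m Hm). rewrite He0p in H.
    apply (Rmult_le_compat_l K1) in H; [|lra].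
    replace (K1 * (K0 / K1)) with K0 in H by (field; lra). lra. }
  set (E := Rpower (K1 / K2) (/ (e2 - e1))).
  assert (HE : 0 < E) by apply Rpow_pos.
  assert (HEp : Rpower E (e2 - e1) = K1 / K2).
  { unfold E. rewrite Rpower_mult, Rinv_l by lra. apply Rpower_1.
    apply Rdiv_lt_0_compat; lra. }
  assert (HfE : f E < 0).
  { unfold f, gf. replace e2 with (e1 + (e2 - e1)) by ring. rewrite Rpower_plus, HEp.
    field_simplify; lra. }
  assert (HEm : m < E).
  { destruct (Rlt_or_le m E) as [|Hle]; auto.
    assert (Rpower E (e2 - e1) <= Rpower m (e2 - e1)) by (apply Rle_Rpower_l; lra).
    rewrite HEp, Hmp in H. unfold base in H.
    apply (Rmult_le_compat_l K2) in H; [|lra]. field_simplify in H; try lra.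
    assert (K1 * e1 < K1 * e2) by nra.
    apply (Rmult_le_compat_l e2) in H; [|lra]. field_simplify in H; lra. }
  destruct (Ranalysis5.IVT_interv f e0 m) as [z1 [Hz1 Ez1]]; auto.
  { intros x Hx. apply gf_cont; lra. }
  destruct (Ranalysis5.IVT_interv (fun t => - f t) m E) as [z2 [Hz2 Ez2]]; auto.
  { intros x Hx. apply continuity_pt_opp. apply gf_cont; lra. }
  { lra. } { lra. }
  assert (z1 <> e0) by (intro; subst; lra).
  assert (z1 <> m) by (intro; subst; lra).
  assert (z2 <> m) by (intro; subst; lra).
  assert (z2 <> E) by (intro; subst; lra).
  assert (Ez2' : f z2 = 0) by lra.
  exists z1, z2, m. split; [lra|]. split; [lra|]. split; [auto|]. split; [auto|].
  split; [auto|].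
  intros t Ht.
  destruct (Rtotal_order t z1) as [T1|[T1|T1]].
  - assert (f t < f z1) by (apply inc; lra). lra.
  - subst; lra.
  - destruct (Rle_or_lt t m) as [T2|T2].
    + assert (f z1 < f t) by (apply inc; lra). lra.
    + destruct (Rtotal_order t z2) as [T3|[T3|T3]].
      * assert (f z2 < f t) by (apply dec; lra). lra.
      * subst; lra.
      * assert (f t < f z2) by (apply dec; lra). lra.
Qed.

Definition phi2 A B D al be t := A * Rpower t 2 - B * Rpower t al - D * Rpower t be.
Definition phi2' A B D al be t :=
  A * (2 * Rpower t (2 - 1)) - B * (al * Rpower t (al - 1)) - D * (be * Rpower t (be - 1)).

Lemma phi2_deriv A B D al be t : 0 < t ->
  derivable_pt_lim (phi2 A B D al be) t (phi2' A B D al be t).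
Proof.
  intros Ht. unfold phi2, phi2'.
  apply (derivable_pt_lim_minus (fun t => A * Rpower t 2 - B * Rpower t al) (fun t => D * Rpower t be)).
  2: apply (derivable_pt_lim_scal (fun t => Rpower t be)); now apply derivable_pt_lim_power.
  apply (derivable_pt_lim_minus (fun t => A * Rpower t 2) (fun t => B * Rpower t al)).
  - apply (derivable_pt_lim_scal (fun t => Rpower t 2)). now apply derivable_pt_lim_power.
  - apply (derivable_pt_lim_scal (fun t => Rpower t al)). now apply derivable_pt_lim_power.
Qed.

Theorem lemma3p4 (N : nat) (a c p q C H : R) :
  (1 <= N <= 3)%nat ->
  0 < a -> 0 < c ->
  1 <= q < 2 ->
  2 + 8 / INR N < p -> below_two_star N p ->
  0 < C ->
  0 < H ->
  H < h_bound N a c p q C ->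
  (* local strict minimum at a negative level *)
  (exists t0, 0 < t0 /\ phi N a c p q C H t0 < 0 /\
     exists d, 0 < d /\ forall t, 0 < t -> t <> t0 -> Rabs (t - t0) < d ->
       phi N a c p q C H t0 < phi N a c p q C H t) /\
  (* global strict maximum at a positive level *)
  (exists t1, 0 < t1 /\ 0 < phi N a c p q C H t1 /\
     forall t, 0 < t -> t <> t1 -> phi N a c p q C H t < phi N a c p q C H t1) /\
  (* zeros R1 < R2 and positivity set *)
  (exists R1 R2, 0 < R1 < R2 /\
     phi N a c p q C H R1 = 0 /\ phi N a c p q C H R2 = 0 /\
     forall t, 0 < t -> (0 < phi N a c p q C H t <-> R1 < t < R2)).
Proof.
  intros HN Ha Hc Hq Hp Hst HC HH Hhb0.
  assert (HNpos : 0 < INR N) by (apply lt_0_INR; lia).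
  assert (Hp2 : 2 < p).
  { assert (0 < 8 / INR N) by (apply Rdiv_lt_0_compat; lra). lra. }
  set (g := gammap N p) in *.
  assert (Hgdef : g * (2 * p) = INR N * (p - 2)) by (unfold g, gammap; field; lra).
  assert (Hgs : 0 < g < 1 /\ 2 < p * g).
  { assert (H8 : 8 < (p - 2) * INR N).
    { apply (Rmult_lt_compat_r (INR N)) in Hp; [|lra].
      replace ((2 + 8 / INR N) * INR N) with (2 * INR N + 8) in Hp by (field; lra). lra. }
    destruct N as [|[|[|[|N]]]]; try lia; simpl in *.
    - split; [split|]; nra.
    - split; [split|]; nra.
    - assert (p < 6).
      { pose proof (Hst (le_n 3)) as Hs. replace (INR 3) with 3 in Hs by (simpl; ring). replace (2 * 3 / (3 - 2)) with 6 in Hs by field. lra. }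
      split; [split|]; nra. }
  destruct Hgs as [[Hg0 Hg1] Hpg].
  set (A := a / 2). set (B := / p * Rpower C p * Rpower c ((p - p * g) / 2)).
  set (D := / q * Rpower C q * Rpower c (q * (1 - g) / 2) * H).
  set (al := p * g). set (be := q * g). set (e1 := 2 - be). set (e2 := al - be).
  assert (HA : 0 < A) by (unfold A; lra).
  assert (HB : 0 < B).
  { unfold B. assert (0 < Rpower C p) by apply Rpow_pos.
    assert (0 < Rpower c ((p - p * g) / 2)) by apply Rpow_pos.
    assert (0 < / p) by (apply Rinv_0_lt_compat; lra). 
    apply Rmult_lt_0_compat; [apply Rmult_lt_0_compat|]; auto. }
  assert (HD : 0 < D).
  { unfold D. assert (0 < Rpower C q) by apply Rpow_pos.
    assert (0 < Rpower c (q * (1 - g) / 2)) by apply Rpow_pos.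
    assert (0 < / q) by (apply Rinv_0_lt_compat; lra).
    repeat apply Rmult_lt_0_compat; auto. }
  assert (Hbe : 0 < be < 2) by (unfold be; split; nra).
  assert (He1 : 0 < e1) by (unfold e1; lra).
  assert (He12 : e1 < e2) by (unfold e1, e2, al; lra).
  assert (Hphi : forall t, 0 < t -> phi N a c p q C H t = phi2 A B D al be t).
  { intros t Ht. unfold phi, phi2. fold g. fold al be A.
    replace (t ^ 2) with (Rpower t 2).
    - unfold B, D, A, al, be, g. cbv zeta. ring.
    - rewrite <- (Rpower_pow 2 t Ht). f_equal; simpl; ring. }
  assert (Hphi2 : forall t, 0 < t -> phi2 A B D al be t = Rpower t be * gf D A B e1 e2 t).
  { intros t Ht. unfold phi2, gf.
    replace (Rpower t 2) with (Rpower t (be + e1)) by (f_equal; unfold e1; ring).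
    replace (Rpower t al) with (Rpower t (be + e2)) by (f_equal; unfold e2; ring).
    rewrite !Rpower_plus. ring. }
  assert (Hts : exists ts, 0 < ts /\ 0 < gf D A B e1 e2 ts).
  { set (base := A * e1 / (B * e2)).
    assert (Hbase : 0 < base) by (unfold base; apply Rdiv_lt_0_compat; nra).
    set (m0 := Rpower base (/ (e2 - e1))).
    exists m0. split; [apply Rpow_pos|].
    assert (Hpg2 : p * g - 2 <> 0) by lra.
    assert (Hpq : p - q <> 0) by lra.
    set (k := (2 - q * g) / (p * g - 2)).
    set (r := (p - p * g) / 2). set (s := q * (1 - g) / 2).
    set (hb := a * p * (2 - q * g) / (2 * g * (p - q) * Rpower C p)).
    assert (Hhb : 0 < hb).
    { unfold hb. assert (0 < Rpower C p) by apply Rpow_pos.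
      assert (0 < 2 - q * g) by nra.
      assert (0 < a * p) by (apply Rmult_lt_0_compat; lra).
      assert (0 < a * p * (2 - q * g)) by (apply Rmult_lt_0_compat; lra).
      assert (0 < 2 * g) by lra.
      assert (0 < 2 * g * (p - q)) by (apply Rmult_lt_0_compat; lra).
      assert (0 < 2 * g * (p - q) * Rpower C p) by (apply Rmult_lt_0_compat; lra).
      apply Rdiv_lt_0_compat; lra. }
    assert (Hcr : 0 < Rpower c r) by apply Rpow_pos.
    assert (Hcs : 0 < Rpower c s) by apply Rpow_pos.
    assert (HCp : 0 < Rpower C p) by apply Rpow_pos.
    assert (HCq : 0 < Rpower C q) by apply Rpow_pos.
    assert (Ebase : base = hb * Rpower c (- r)).
    { rewrite Rpower_Ropp. unfold base, hb, A, B, e1, e2, al, be. fold r.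
      field. repeat split; try lra. nra. }
    set (Y := Rpower hb k * Rpower c (- (r * k))).
    assert (EX : Rpower m0 e1 = Y).
    { unfold m0, Y. rewrite Rpower_mult.
      replace (/ (e2 - e1) * e1) with k by (unfold k, e1, e2, al, be; field; lra).
      rewrite Ebase, <- Rpower_mult_distr by (auto; apply Rpow_pos).
      rewrite Rpower_mult. f_equal; f_equal; ring. }
    assert (EZ : Rpower m0 (e2 - e1) = base).
    { unfold m0. rewrite Rpower_mult, Rinv_l by lra. now apply Rpower_1. }
    assert (Egf : gf D A B e1 e2 m0 = A * (e2 - e1) / e2 * Y - D).
    { unfold gf. replace e2 with (e1 + (e2 - e1)) at 1 by ring.
      rewrite Rpower_plus, EZ, EX. unfold base. field. all: unfold e2, al, be; repeat split; try lra; nra. }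
    assert (Ehb : h_bound N a c p q C =
      a * q * (p * g - 2) / (2 * Rpower C q * g * (p - q)) * Y / Rpower c s).
    { unfold h_bound. cbv zeta. fold g. fold hb. fold k.
      replace (- ((1 - g) * (p - q) / (p * g - 2))) with (- (r * k) + - s)
        by (unfold r, k, s; field; lra).
      rewrite Rpower_plus, (Rpower_Ropp c s). unfold Y. field. lra. }
    rewrite Egf. rewrite Ehb in Hhb0.
    assert (HD' : D = / q * Rpower C q * Rpower c s * H) by reflexivity.
    apply (Rmult_lt_compat_l (/ q * Rpower C q * Rpower c s)) in Hhb0.
    2: { assert (0 < / q) by (apply Rinv_0_lt_compat; lra). nra. }
    rewrite <- HD' in Hhb0.
    replace (/ q * Rpower C q * Rpower c s *
      (a * q * (p * g - 2) / (2 * Rpower C q * g * (p - q)) * Y / Rpower c s))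
      with (A * (e2 - e1) / e2 * Y) in Hhb0.
    - lra.
    - unfold A, e1, e2, al, be. field. repeat split; try lra. nra. }
  destruct (generic D A B e1 e2 HD HA HB He1 He12 Hts)
    as [R1 [R2 [m [HR1 [HR2 [ER1 [ER2 [Hm Hsg]]]]]]]].
  assert (Hchi : exists ts, 0 < ts /\ 0 < gf (be * D) (2 * A) (al * B) e1 e2 ts).
  { exists R1. split; [lra|]. unfold gf in *.
    assert (HX : 0 < Rpower R1 e1) by apply Rpow_pos.
    specialize (Hm R1 ltac:(lra)).
    replace (Rpower R1 e2) with (Rpower R1 e1 * Rpower R1 (e2 - e1))
      in * by (rewrite <- Rpower_plus; f_equal; ring).
    assert (D = A * Rpower R1 e1 - B * (Rpower R1 e1 * Rpower R1 (e2 - e1))) by lra.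
    rewrite H0. unfold e1, e2 in *. nra. }
  assert (Hal : 0 < al) by (unfold al; lra).
  destruct (generic (be * D) (2 * A) (al * B) e1 e2 ltac:(nra) ltac:(lra) ltac:(nra) He1 He12 Hchi)
    as [w1 [w2 [m' [Hw1 [Hw2 [Ew1 [Ew2 [_ Hsw]]]]]]]].
  set (f := phi2 A B D al be).
  assert (Hder : forall t, 0 < t -> phi2' A B D al be t = Rpower t (be - 1) * gf (be * D) (2 * A) (al * B) e1 e2 t).
  { intros t Ht. unfold phi2', gf.
    replace (Rpower t (2 - 1)) with (Rpower t ((be - 1) + e1)) by (f_equal; unfold e1; ring).
    replace (Rpower t (al - 1)) with (Rpower t ((be - 1) + e2)) by (f_equal; unfold e2; ring).
    rewrite !Rpower_plus. ring. }
  assert (dec1 : forall x y, 0 < x -> x < y -> y <= w1 -> f y < f x).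
  { intros x y Hx Hxy Hy. apply (decr_of_deriv f (phi2' A B D al be)); auto.
    - intros c0 Hc0. apply phi2_deriv; lra.
    - intros c0 Hc0. rewrite Hder by lra.
      assert (0 < Rpower c0 (be - 1)) by apply Rpow_pos.
      assert (gf (be * D) (2 * A) (al * B) e1 e2 c0 < 0) by (apply (proj2 (Hsw c0 ltac:(lra))); lra).
      nra. }
  assert (inc2 : forall x y, w1 <= x -> x < y -> y <= w2 -> f x < f y).
  { intros x y Hx Hxy Hy. apply (incr_of_deriv f (phi2' A B D al be)); auto.
    - intros c0 Hc0. apply phi2_deriv; lra.
    - intros c0 Hc0. rewrite Hder by lra.
      assert (0 < Rpower c0 (be - 1)) by apply Rpow_pos.
      assert (0 < gf (be * D) (2 * A) (al * B) e1 e2 c0) by (apply (proj1 (Hsw c0 ltac:(lra))); lra).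
      nra. }
  assert (dec3 : forall x y, w2 <= x -> x < y -> f y < f x).
  { intros x y Hx Hxy. apply (decr_of_deriv f (phi2' A B D al be)); auto.
    - intros c0 Hc0. apply phi2_deriv; lra.
    - intros c0 Hc0. rewrite Hder by lra.
      assert (0 < Rpower c0 (be - 1)) by apply Rpow_pos.
      assert (gf (be * D) (2 * A) (al * B) e1 e2 c0 < 0) by (apply (proj2 (Hsw c0 ltac:(lra))); lra).
      nra. }
  assert (Hpos : forall t, 0 < t -> (0 < f t <-> R1 < t < R2)).
  { intros t Ht. unfold f. rewrite Hphi2 by lra.
    assert (0 < Rpower t be) by apply Rpow_pos.
    destruct (Hsg t Ht) as [[S1 S2] _]. split.
    - intros. apply S1. nra.
    - intros. specialize (S2 H1). nra. }
  assert (Hneg : forall t, 0 < t -> t < R1 -> f t < 0).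
  { intros t Ht Ht1. unfold f. rewrite Hphi2 by lra.
    assert (0 < Rpower t be) by apply Rpow_pos.
    destruct (Hsg t Ht) as [_ [_ S2]].
    assert (gf D A B e1 e2 t < 0) by (apply S2; lra). nra. }
  assert (neg1 : forall t, 0 < t -> t <= w1 -> f t < 0).
  { intros t Ht Htw. set (s := Rmin t R1 / 2).
    assert (0 < s /\ s < t /\ s < R1) by (unfold s; unfold Rmin; destruct (Rle_dec t R1); lra).
    assert (f s < 0) by (apply Hneg; lra).
    assert (f t < f s) by (apply dec1; lra). lra. }
  assert (Hfw2 : 0 < f w2).
  { set (u := (R1 + R2) / 2).
    assert (Hu : 0 < u /\ R1 < u < R2) by (unfold u; lra).
    assert (0 < f u) by (apply Hpos; lra).
    destruct (Rle_or_lt u w1) as [U1|U1].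
    - assert (f u < 0) by (apply neg1; lra). lra.
    - destruct (Rle_or_lt u w2) as [U2|U2].
      + destruct (Req_dec u w2) as [->|U3]; [lra|].
        assert (f u < f w2) by (apply inc2; lra). lra.
      + assert (f u < f w2) by (apply dec3; lra). lra. }
  split; [|split].
  - exists w1. split; [lra|]. rewrite Hphi by lra. split.
    + apply neg1; lra.
    + exists (w2 - w1). split; [lra|]. intros t Ht Htn Hd.
      rewrite Hphi by lra. fold f.
      apply Rabs_def2 in Hd.
      destruct (Rtotal_order t w1) as [T|[T|T]].
      * apply dec1; lra.
      * contradiction.
      * apply inc2; lra.
  - exists w2. split; [lra|]. rewrite Hphi by lra. split; [exact Hfw2|].
    intros t Ht Htn. rewrite Hphi by lra. fold f.
    destruct (Rle_or_lt t w1) as [T|T].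
    + assert (f t < 0) by (apply neg1; lra). lra.
    + destruct (Rtotal_order t w2) as [T2|[T2|T2]].
      * apply inc2; lra.
      * contradiction.
      * apply dec3; lra.
  - exists R1, R2. split; [lra|].
    rewrite !Hphi by lra. rewrite !Hphi2 by lra. rewrite ER1, ER2. split; [ring|split; [ring|]].
    intros t Ht. rewrite Hphi by lra. now apply Hpos.
Qed.
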